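(* Let $p\in\{2,3\}$. Let $\rho_{X^{\mathrm B}X^{\mathrm C}BC}$ be a classical-quantum state where $X^{\mathrm B},X^{\mathrm C}$ are classical registers taking values in $\mathbb{F}_p^l$, and $B$ and $C$ are quantum registers held by Bob and Charlie respectively. Suppose that for any measurements Bob and Charlie perform on their registers producing outputs $G^{\mathrm B},G^{\mathrm C}$, we have $\Pr[G^{\mathrm B}=X^{\mathrm B}\wedge G^{\mathrm C}=X^{\mathrm C}]\le\delta$. Let $\mathsf{r}^{\mathrm B},\mathsf{r}^{\mathrm C}$ be independent and uniformly distributed in $\mathbb{F}_p^l$ (independent of the state), given to Bob and Charlie respectively, who then perform measurements on their quantum registers depending on $\mathsf r^{\mathrm B}$ and $\mathsf r^{\mathrm C}$ respectively, producing outputs $G^{\mathrm B}(\mathsf r^{\mathrm B}),G^{\mathrm C}(\mathsf r^{\mathrm C})\in\mathbb F_p$. Then \[\Pr\left[\bigvee_{\substack{j,k\in\mathbb F_p:\\ j+k=0 \bmod p}}\left(G^{\mathrm B}(\mathsf r^{\mathrm B})=X^{\mathrm B}\cdot\mathsf r^{\mathrm B}+j\right)\wedge\left(G^{\mathrm C}(\mathsf r^{\mathrm C})=X^{\mathrm C}\cdot\mathsf r^{\mathrm C}+k\right)\right]\le\frac1p+O(\delta^{1/3}),\] where the probability is over $X^{\mathrm B}X^{\mathrm C}$, $\mathsf r^{\mathrm B}\mathsf r^{\mathrm C}$ and the measurements, and $\cdot$ denotes the inner product over $\mathbb F_p$.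
   Context: Bob and Charlie act on their own registers only and do not communicate. The constant in $O(\cdot)$ is absolute. *)

(* Defs.v *)
From mathcomp Require Import all_boot all_order all_algebra.
From mathcomp.real_closed Require Export mxtens.
Export Order.TTheory GRing.Theory Num.Theory.
Set Implicit Arguments. Unset Strict Implicit. Unset Printing Implicit Defensive.
Local Open Scope ring_scope.

Definition adjmx (C : numClosedFieldType) m n (A : 'M[C]_(m, n)) : 'M[C]_(n, m) :=
  (map_mx Num.conj A)^T.

Definition psd (C : numClosedFieldType) n (A : 'M[C]_n) : Prop :=
  adjmx A = A /\ forall v : 'cV[C]_n, (adjmx v *m A *m v) 0 0 \is Num.nneg.

Definition povm (C : numClosedFieldType) (I : finType) n (E : I -> 'M[C]_n) : Prop :=
  (forall i, psd (E i)) /\ \sum_(i : I) E i = 1%:M.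

(* A classical-quantum state rho = sum_x |x><x| (x) rho_x with classical
   registers (XB, XC) in T and quantum register BC = C^dB (x) C^dC:
   each rho_x is PSD (subnormalised, absorbing the probability of x),
   and the total trace is 1. *)
Definition cq_state (C : numClosedFieldType) (T : finType) dB dC
    (rho : T -> T -> 'M[C]_(dB * dC)) : Prop :=
  (forall xB xC, psd (rho xB xC)) /\ \sum_(xB : T) \sum_(xC : T) \tr (rho xB xC) = 1.

Definition dotv (F : nzRingType) l (x y : 'rV[F]_l) : F := \sum_(i < l) x 0 i * y 0 i.

(* Main.v *)
Require Import Defs.
From mathcomp Require Import all_boot all_order all_algebra.
From mathcomp Require Import spectral.
From mathcomp Require Import ring.
Local Open Scope ring_scope.
Import Order.TTheory GRing.Theory Num.Theory.
Set Implicit Arguments. Unset Strict Implicit. Unset Printing Implicit Defensive.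

Section Adj.
Variable C : numClosedFieldType.

Lemma adjmxE m n (A : 'M[C]_(m,n)) i j : adjmx A i j = (A j i)^*.
Proof. by rewrite /adjmx !mxE. Qed.

Lemma adjmxK m n (A : 'M[C]_(m,n)) : adjmx (adjmx A) = A.
Proof. by apply/matrixP => i j; rewrite !adjmxE conjCK. Qed.

Lemma adjmxM m n k (A : 'M[C]_(m,n)) (B : 'M[C]_(n,k)) :
  adjmx (A *m B) = adjmx B *m adjmx A.
Proof.
apply/matrixP => i j; rewrite adjmxE !mxE rmorph_sum; apply: eq_bigr => l _.
by rewrite !adjmxE rmorphM mulrC.
Qed.

Lemma adjmxD m n (A B : 'M[C]_(m,n)) : adjmx (A + B) = adjmx A + adjmx B.
Proof. by apply/matrixP => i j; rewrite !adjmxE !mxE rmorphD. Qed.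

Lemma adjmxZ m n a (A : 'M[C]_(m,n)) : adjmx (a *: A) = a^* *: adjmx A.
Proof. by apply/matrixP => i j; rewrite !adjmxE !mxE rmorphM. Qed.

Lemma adjmx_sum m n (I : Type) (r : seq I) (P : pred I) (F : I -> 'M[C]_(m,n)) :
  adjmx (\sum_(i <- r | P i) F i) = \sum_(i <- r | P i) adjmx (F i).
Proof.
apply/matrixP => i j; rewrite adjmxE !summxE rmorph_sum.
by apply: eq_bigr => k _; rewrite adjmxE.
Qed.

Lemma adjmx1 n : adjmx (1%:M : 'M[C]_n) = 1%:M.
Proof.
apply/matrixP => i j; rewrite adjmxE !mxE eq_sym.
by rewrite rmorph_nat.
Qed.

Lemma mxtrace_adj n (A : 'M[C]_n) : \tr (adjmx A) = (\tr A)^*.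
Proof. by rewrite /mxtrace rmorph_sum; apply: eq_bigr => i _; rewrite adjmxE. Qed.

Lemma adjmx_tens m n p q (A : 'M[C]_(m,n)) (B : 'M[C]_(p,q)) :
  adjmx (A *t B) = adjmx A *t adjmx B.
Proof. by rewrite /adjmx map_mxT trmx_tens. Qed.

Lemma tensmx_suml m n p q (I : Type) (r : seq I) (P : pred I)
   (F : I -> 'M[C]_(m,n)) (B : 'M[C]_(p,q)) :
  (\sum_(i <- r | P i) F i) *t B = \sum_(i <- r | P i) (F i *t B).
Proof.
apply/matrixP => i j; rewrite !mxE !summxE mulr_suml.
by apply: eq_bigr => k _; rewrite !mxE.
Qed.

Lemma tensmx_sumr m n p q (I : Type) (r : seq I) (P : pred I)
   (A : 'M[C]_(m,n)) (F : I -> 'M[C]_(p,q)) :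
  A *t (\sum_(i <- r | P i) F i) = \sum_(i <- r | P i) (A *t F i).
Proof.
apply/matrixP => i j; rewrite !mxE !summxE mulr_sumr.
by apply: eq_bigr => k _; rewrite !mxE.
Qed.

Lemma tensmxZl m n p q a (A : 'M[C]_(m,n)) (B : 'M[C]_(p,q)) :
  (a *: A) *t B = a *: (A *t B).
Proof. by apply/matrixP => i j; rewrite !mxE mulrA. Qed.

Lemma tensmxZr m n p q a (A : 'M[C]_(m,n)) (B : 'M[C]_(p,q)) :
  A *t (a *: B) = a *: (A *t B).
Proof. by apply/matrixP => i j; rewrite !mxE mulrCA. Qed.

Lemma tensmxDl m n p q (A A' : 'M[C]_(m,n)) (B : 'M[C]_(p,q)) :
  (A + A') *t B = A *t B + A' *t B.
Proof. by apply/matrixP => i j; rewrite !mxE mulrDl. Qed.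

Lemma tensmxDr m n p q (A : 'M[C]_(m,n)) (B B' : 'M[C]_(p,q)) :
  A *t (B + B') = A *t B + A *t B'.
Proof. by apply/matrixP => i j; rewrite !mxE mulrDr. Qed.

Lemma tensmx11 m n : (1%:M : 'M[C]_m) *t (1%:M : 'M[C]_n) = 1%:M.
Proof.
apply/matrixP => i j.
case: (mxtens_indexP i) => i1 i2; case: (mxtens_indexP j) => j1 j2.
rewrite tensmxE !mxE (inj_eq (can_inj (@mxtens_indexK m n))) xpair_eqE.
by case: (i1 == j1); case: (i2 == j2); rewrite ?mulr1 ?mulr0.
Qed.

Lemma psd_sqrt n (A : 'M[C]_n) : psd A -> exists S : 'M[C]_n, A = adjmx S *m S.
Proof.
case=> Ah Apos.
have Aherm : A \is hermsymmx.
  apply/is_hermitianmxP; rewrite expr0 scale1r.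
  by rewrite -map_trmx -{1}Ah.
have /hermitian_normalmx /orthomx_spectralP Aeq := Aherm.
set P := spectralmx A in Aeq; set d := spectral_diag A in Aeq.
have Pu : P \is unitarymx by apply: spectral_unitarymx.
have Padj : invmx P = adjmx P by rewrite invmx_unitary // /adjmx map_trmx.
have PP : P *m adjmx P = 1%:M by rewrite -Padj mulmxV // unitarymx_unit.
rewrite Padj in Aeq.
have PAP : P *m A *m adjmx P = diag_mx d.
  by rewrite Aeq !mulmxA PP mul1mx -!mulmxA PP mulmx1.
have dge0 : forall i, 0 <= d 0 i.
  move=> i.
  have := Apos (adjmx (row i P)); rewrite nnegrE adjmxK.
  suff -> : (row i P *m A *m adjmx (row i P)) 0 0 = d 0 i by [].
  have -> : adjmx (row i P) = col i (adjmx P).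
    by apply/matrixP => k l; rewrite !mxE.
  rewrite -row_mul.
  have -> : (row i (P *m A) *m col i (adjmx P)) 0 0 = (P *m A *m adjmx P) i i.
    by rewrite !mxE; apply: eq_bigr => k _; rewrite !mxE.
  by rewrite PAP !mxE eqxx mulr1n.
pose D := diag_mx (map_mx sqrtC d).
have Dadj : adjmx D = D.
  apply/matrixP => i j; rewrite adjmxE !mxE eq_sym.
  case: (i =P j) => [->|_]; rewrite ?mulr1n ?mulr0n ?rmorph0 //.
  by rewrite geC0_conj // sqrtC_ge0.
have DD : D *m D = diag_mx d.
  rewrite mul_diag_mx; apply/matrixP => i j; rewrite !mxE.
  case: (i =P j) => [->|_]; rewrite ?mulr1n ?mulr0n ?mulr0 //.
  by rewrite -expr2 sqrtCK.
exists (D *m P); rewrite adjmxM Dadj Aeq -DD !mulmxA.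
by [].
Qed.


Definition fq k m (rho : 'M[C]_k) (A B : 'M[C]_(m,k)) := \tr (A *m rho *m adjmx B).

Lemma fq_ge0 k m (rho : 'M[C]_k) (A : 'M[C]_(m,k)) : psd rho -> 0 <= fq rho A A.
Proof.
case=> _ hpos; rewrite /fq /mxtrace; apply: sumr_ge0 => i _.
have := hpos (adjmx (row i A)); rewrite nnegrE adjmxK.
suff -> : (row i A *m rho *m adjmx (row i A)) 0 0 = (A *m rho *m adjmx A) i i by [].
have -> : adjmx (row i A) = col i (adjmx A) by apply/matrixP => a b; rewrite !mxE.
by rewrite -row_mul !mxE; apply: eq_bigr => j _; rewrite !mxE.
Qed.

Lemma fq_conj k m (rho : 'M[C]_k) (A B : 'M[C]_(m,k)) : adjmx rho = rho ->
  fq rho B A = (fq rho A B)^*.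
Proof. by move=> h; rewrite /fq -mxtrace_adj !adjmxM adjmxK h mulmxA. Qed.

Lemma fq_DZ k m (rho : 'M[C]_k) (A B : 'M[C]_(m,k)) z :
  fq rho (A + z *: B) (A + z *: B) =
  fq rho A A + z^* * fq rho A B + z * fq rho B A + z * z^* * fq rho B B.
Proof.
rewrite /fq adjmxD adjmxZ !mulmxDl !mulmxDr -!scalemxAl -!scalemxAr.
rewrite !mxtraceD !mxtraceZ; ring.
Qed.

Lemma fq_CS k m (rho : 'M[C]_k) (A B : 'M[C]_(m,k)) : psd rho ->
  `|fq rho A B| ^+ 2 <= fq rho A A * fq rho B B.
Proof.
move=> hr; have herm : adjmx rho = rho by case: hr.
have key : forall t, 0 <= t -> 0 <= fq rho A A - 2%:R * t * `|fq rho A B| ^+ 2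
     + t ^+ 2 * `|fq rho A B| ^+ 2 * fq rho B B.
  move=> t t0.
  have := fq_ge0 (A + (- (t * fq rho A B)) *: B) hr.
  have cM : forall x y : C, (x * y)^* = x^* * y^* by move=> x y; rewrite rmorphM.
  have cN : forall x : C, (- x)^* = - x^* by move=> x; rewrite rmorphN.
  rewrite fq_DZ (fq_conj A B herm) normCK cN cM (geC0_conj t0).
  set a := fq rho A B; set al := fq rho A A; set be := fq rho B B.
  suff -> : al + - (t * a^*) * a + - (t * a) * a^* + - (t * a) * - (t * a^*) * be
     = al - 2%:R * t * (a * a^*) + t ^+ 2 * (a * a^*) * be by [].
  ring.
set a := fq rho A B in key *; set al := fq rho A A in key *; set be := fq rho B B in key *.
have al0 : 0 <= al by apply: fq_ge0.
have be0 : 0 <= be by apply: fq_ge0.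
have n0 : 0 <= `|a| ^+ 2 by rewrite exprn_ge0.
move: be0; rewrite le0r => /orP [/eqP be_eq0 | be_gt0].
  rewrite be_eq0 mulr0.
  move: n0; rewrite le0r => /orP [/eqP -> //| n_gt0].
  exfalso.
  have t0 : 0 <= (al + 1) / (2%:R * `|a| ^+ 2).
    by rewrite divr_ge0 ?addr_ge0 ?ler01 // mulr_ge0 // ltW.
  have := key _ t0; rewrite be_eq0 mulr0 addr0.
  have -> : al - 2%:R * ((al + 1) / (2%:R * `|a| ^+ 2)) * `|a| ^+ 2 = - 1.
    field.
    by apply/eqP => h; move: n_gt0; rewrite h expr0n /= ltxx.
  by rewrite oppr_ge0 ler10.
have := key be^-1 (ltW (eq_ind_r is_true be_gt0 (invr_gt0 be))).
have -> : al - 2%:R * be^-1 * `|a| ^+ 2 + be^-1 ^+ 2 * `|a| ^+ 2 * be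
    = al - `|a| ^+ 2 / be.
  by field; rewrite gt_eqF.
by rewrite subr_ge0 ler_pdivrMr.
Qed.

Lemma amgm (T t m lam : C) : 0 <= t -> 0 <= m -> `|T| ^+ 2 <= t * m -> 0 < lam ->
  2%:R * lam * `|T| <= lam ^+ 2 * t + m.
Proof.
move=> t0 m0 h l0.
have L0 : 0 <= 2%:R * lam * `|T|.
  by apply: mulr_ge0 => //; apply: mulr_ge0 => //; exact: ltW.
have R0 : 0 <= lam ^+ 2 * t + m.
  by apply: addr_ge0 => //; apply: mulr_ge0 => //; apply: exprn_ge0; exact: ltW.
rewrite -ler_sqr ?nnegrE // -subr_ge0.
have -> : (lam ^+ 2 * t + m) ^+ 2 - (2%:R * lam * `|T|) ^+ 2 =
   (lam ^+ 2 * t - m) ^+ 2 + 4%:R * lam ^+ 2 * (t * m - `|T| ^+ 2) by ring.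
apply: addr_ge0.
  apply: real_exprn_even_ge0 => //.
  by apply: rpredB; apply: ger0_real => //; apply: mulr_ge0 => //; apply: exprn_ge0; exact: ltW.
apply: mulr_ge0; last by rewrite subr_ge0.
by apply: mulr_ge0 => //; apply: exprn_ge0; exact: ltW.
Qed.

Lemma tr_adjM k (rho : 'M[C]_k) m (Z : 'M[C]_(m,k)) :
  \tr (rho *m (adjmx Z *m Z)) = fq rho Z Z.
Proof. by rewrite /fq [RHS]mxtrace_mulC [LHS]mxtrace_mulC -mulmxA. Qed.

Lemma tr_psd_tens dB dC (rho : 'M[C]_(dB * dC)) (X : 'M[C]_dB) (Y : 'M[C]_dC) :
  psd rho -> psd X -> psd Y -> 0 <= \tr (rho *m (X *t Y)).
Proof.
move=> hr /psd_sqrt [S ->] /psd_sqrt [T ->].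
by rewrite -tensmx_mul -adjmx_tens tr_adjM fq_ge0.
Qed.

Lemma psd_adjM m k (M : 'M[C]_(m,k)) : psd (adjmx M *m M).
Proof.
split; first by rewrite adjmxM adjmxK.
move=> v; rewrite nnegrE.
have -> : adjmx v *m (adjmx M *m M) *m v = adjmx (M *m v) *m (M *m v).
  by rewrite adjmxM !mulmxA.
rewrite mxE.
by apply: sumr_ge0 => i _; rewrite adjmxE mulrC mul_conjC_ge0.
Qed.

Lemma psdD n (A B : 'M[C]_n) : psd A -> psd B -> psd (A + B).
Proof.
move=> [hA pA] [hB pB]; split; first by rewrite adjmxD hA hB.
move=> v; rewrite mulmxDr mulmxDl mxE nnegrE addr_ge0 //; rewrite -nnegrE; [exact: pA | exact: pB].
Qed.

Lemma psdZ n (A : 'M[C]_n) a : 0 <= a -> psd A -> psd (a *: A).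
Proof.
move=> a0 [hA pA]; split; first by rewrite adjmxZ hA geC0_conj.
move=> v; rewrite -scalemxAr -scalemxAl mxE nnegrE mulr_ge0 // -nnegrE; exact: pA.
Qed.

Lemma psd0 n : psd (0 : 'M[C]_n).
Proof.
split; first by apply/matrixP => i j; rewrite adjmxE !mxE rmorph0.
by move=> v; rewrite mulmx0 mul0mx mxE nnegrE.
Qed.


Definition nrm n (v : 'cV[C]_n) := (adjmx v *m v) 0 0.

Lemma nrm_ge0 n (v : 'cV[C]_n) : 0 <= nrm v.
Proof. by rewrite /nrm mxE; apply: sumr_ge0 => i _; rewrite adjmxE mulrC mul_conjC_ge0. Qed.

Lemma fq_vec n (B : 'M[C]_n) (u v : 'cV[C]_n) :
  fq B (adjmx u) (adjmx v) = (adjmx u *m B *m v) 0 0.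
Proof. by rewrite /fq adjmxK trace_mx11. Qed.

Lemma W_bound (G : finType) n (B : G -> 'M[C]_n) (c : G -> C) :
  povm B -> (forall g, c g * (c g)^* = 1) ->
  forall v : 'cV_n, nrm ((\sum_g c g *: B g) *m v) <= nrm v.
Proof.
move=> [Bpsd Bsum] hc v.
set w := (\sum_g c g *: B g) *m v.
pose x g := (adjmx w *m B g *m v) 0 0.
pose a g := (adjmx w *m B g *m w) 0 0.
pose b g := (adjmx v *m B g *m v) 0 0.
have ex : nrm w = \sum_g c g * x g.
  rewrite /nrm {2}/w mulmxA mulmx_sumr mulmx_suml summxE.
  by apply: eq_bigr => g _; rewrite -scalemxAr -scalemxAl mxE.
have ea : nrm w = \sum_g a g.
  rewrite /nrm -{2}[w]mul1mx -Bsum mulmx_suml mulmx_sumr summxE.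
  by apply: eq_bigr => g _; rewrite /a mulmxA.
have eb : nrm v = \sum_g b g.
  rewrite /nrm -{2}[v]mul1mx -Bsum mulmx_suml mulmx_sumr summxE.
  by apply: eq_bigr => g _; rewrite /b mulmxA.
have hx : forall g, 2%:R * `|x g| <= a g + b g.
  move=> g.
  have a0 : 0 <= a g by rewrite /a -fq_vec fq_ge0.
  have b0 : 0 <= b g by rewrite /b -fq_vec fq_ge0.
  have := @amgm (x g) (a g) (b g) 1 a0 b0 _ ltr01.
  rewrite mulr1 expr1n mul1r; apply.
  by rewrite /x /a /b -!fq_vec fq_CS.
have hc1 : forall g, `|c g| = 1.
  move=> g; apply/eqP; rewrite -(pexpr_eq1 (isT : (0 < 2)%N)) ?normr_ge0 //.
  by rewrite normCK hc.
have H : 2%:R * nrm w <= nrm w + nrm v.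
  rewrite -{1}(ger0_norm (nrm_ge0 w)) {1}ex.
  apply: (@le_trans _ _ (2%:R * \sum_g `|c g * x g|)).
    by apply: ler_wpM2l; [rewrite ler0n | exact: ler_norm_sum].
  rewrite mulr_sumr ea eb -big_split /=; apply: ler_sum => g _.
  by rewrite normrM hc1 mul1r; exact: hx.
by move: H; rewrite mulr_natl mulr2n lerD2l.
Qed.


Lemma povm_complete (T : finType) (x0 : T) d (M : T -> 'M[C]_d) :
  psd (1%:M - \sum_y adjmx (M y) *m M y) ->
  povm (fun y => adjmx (M y) *m M y + (y == x0)%:R *: (1%:M - \sum_y adjmx (M y) *m M y)).
Proof.
move=> hM; split.
  move=> y; apply: psdD; first exact: psd_adjM.
  by apply: psdZ => //; exact: ler0n.
rewrite big_split /=.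
set R := 1%:M - _.
have -> : \sum_y (y == x0)%:R *: R = R.
  rewrite (bigD1 x0) //= eqxx scale1r big1 ?addr0 // => y hy.
  by rewrite (negbTE hy) scale0r.
by rewrite /R addrC subrK.
Qed.

Lemma G_bound (T : finType) (x0 : T) dB dC (rho : T -> T -> 'M[C]_(dB * dC)) (delta : C) :
  cq_state rho ->
  (forall (EB : T -> 'M[C]_dB) (EC : T -> 'M[C]_dC), povm EB -> povm EC ->
      \sum_(xB : T) \sum_(xC : T) \tr (rho xB xC *m (EB xB *t EC xC)) <= delta) ->
  forall (Mb : T -> 'M[C]_dB) (Mc : T -> 'M[C]_dC),
  psd (1%:M - \sum_y adjmx (Mb y) *m Mb y) -> psd (1%:M - \sum_y adjmx (Mc y) *m Mc y) ->
  forall lam, 0 < lam ->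
  2%:R * lam * `|\sum_xB \sum_xC \tr (rho xB xC *m (Mb xB *t Mc xC))| <= lam ^+ 2 + delta.
Proof.
move=> [rpsd rtr] hyp Mb Mc hb hc lam l0.
have := hyp _ _ (povm_complete x0 hb) (povm_complete x0 hc).
set Rb := 1%:M - _; set Rc := 1%:M - _.
pose m xB xC := \tr (rho xB xC *m ((adjmx (Mb xB) *m Mb xB) *t (adjmx (Mc xC) *m Mc xC))).
have hm : \sum_xB \sum_xC m xB xC <= delta -> true by [].
move=> hd.
have msum : \sum_xB \sum_xC m xB xC <= delta.
  apply: le_trans hd; apply: ler_sum => xB _; apply: ler_sum => xC _.
  rewrite /m tensmxDl !tensmxDr !mulmxDr !mxtraceD -addrA lerDl.
  have pR : forall d (R : 'M[C]_d) y, psd R -> psd ((y == x0)%:R *: R).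
    by move=> d R y hR; apply: psdZ => //; exact: ler0n.
  by apply: addr_ge0; [|apply: addr_ge0]; apply: tr_psd_tens => //;
    (apply: psd_adjM || apply: pR => //).
set T0 := fun xB xC => \tr (rho xB xC *m (Mb xB *t Mc xC)).
have hT : forall xB xC, 2%:R * lam * `|T0 xB xC| <= lam ^+ 2 * \tr (rho xB xC) + m xB xC.
  move=> xB xC.
  set Z := Mb xB *t Mc xC.
  have e1 : T0 xB xC = fq (rho xB xC) Z 1%:M by rewrite /fq adjmx1 mulmx1 mxtrace_mulC.
  have e2 : m xB xC = fq (rho xB xC) Z Z.
    by rewrite /m -tr_adjM adjmx_tens tensmx_mul.
  have e3 : \tr (rho xB xC) = fq (rho xB xC) 1%:M 1%:M by rewrite /fq adjmx1 mulmx1 mul1mx.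
  apply: amgm => //.
  - by rewrite e3 fq_ge0.
  - by rewrite e2 fq_ge0.
  by rewrite e1 e2 e3 mulrC fq_CS.
apply: (@le_trans _ _ (2%:R * lam * \sum_xB \sum_xC `|T0 xB xC|)).
  apply: ler_wpM2l; first by apply: mulr_ge0; [rewrite ler0n | exact: ltW].
  apply: (le_trans (ler_norm_sum _ _ _)); apply: ler_sum => xB _; exact: ler_norm_sum.
rewrite mulr_sumr.
apply: (@le_trans _ _ (\sum_xB \sum_xC (lam ^+ 2 * \tr (rho xB xC) + m xB xC))).
  by apply: ler_sum => xB _; rewrite mulr_sumr; apply: ler_sum => xC _; exact: hT.
under eq_bigr => xB _ do rewrite big_split /=.
rewrite big_split /=.
under eq_bigr => xB _ do rewrite -mulr_sumr.
rewrite -mulr_sumr rtr mulr1 lerD2l.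
exact: msum.
Qed.


Lemma psd1 n : psd (1%:M : 'M[C]_n).
Proof. by rewrite -{1}(mulmx1 1%:M) -{1}adjmx1; exact: psd_adjM. Qed.

Lemma delta_ge0 (T : finType) (x0 : T) dB dC (rho : T -> T -> 'M[C]_(dB * dC)) (delta : C) :
  cq_state rho ->
  (forall (EB : T -> 'M[C]_dB) (EC : T -> 'M[C]_dC), povm EB -> povm EC ->
      \sum_(xB : T) \sum_(xC : T) \tr (rho xB xC *m (EB xB *t EC xC)) <= delta) ->
  0 <= delta.
Proof.
move=> [rpsd rtr] hyp.
have pv : forall d, povm (fun y : T => (y == x0)%:R *: (1%:M : 'M[C]_d)).
  move=> d; split; first by move=> y; apply: psdZ; [exact: ler0n | exact: psd1].
  rewrite (bigD1 x0) //= eqxx scale1r big1 ?addr0 // => y hy.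
  by rewrite (negbTE hy) scale0r.
apply: le_trans (hyp _ _ (pv dB) (pv dC)).
apply: sumr_ge0 => xB _; apply: sumr_ge0 => xC _; apply: tr_psd_tens => //;
  by apply: psdZ; [exact: ler0n | exact: psd1].
Qed.

Lemma small_bound (T c : C) : 0 <= c -> c <= 1 ->
  (forall lam, 0 < lam -> 2%:R * lam * `|T| <= lam ^+ 2 + c ^+ 3) -> `|T| <= c.
Proof.
move=> c0 c1 h.
move: c0 h; rewrite le0r => /orP [/eqP ->|cpos] h.
  have e0 : (0 : C) ^+ 3 = 0 by rewrite expr0n.
  move: h; rewrite e0 => h.
  move: (normr_ge0 T); rewrite le0r => /orP [/eqP -> //|Tpos].
  exfalso; have := h _ Tpos.
  rewrite addr0 -mulrA -expr2 mulr_natl mulr2n gerDl => H.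
  by move: H; rewrite (lt_geF (exprn_gt0 2 Tpos)).
have := h _ cpos.
have hc3 : c ^+ 3 <= c ^+ 2.
  by rewrite exprS -{2}[c ^+ 2]mul1r ler_wpM2r // exprn_ge0 // ltW.
move=> H; have : 2%:R * c * `|T| <= 2%:R * c * c.
  apply: le_trans H _.
  by rewrite -mulrA -expr2 mulr_natl mulr2n lerD2l.
rewrite ler_pM2l //; apply: mulr_gt0 => //; exact: ltr0n.
Qed.

End Adj.
Section Char.
Variable C : numClosedFieldType.
Variable p : nat.
Hypothesis hp : prime p.
Variable z : C.
Hypothesis zp : z ^+ p = 1.
Hypothesis z1 : z != 1.

Definition ee (t : 'F_p) : C := z ^+ (val t).

Lemma valFpD (s t : 'F_p) : val (s + t) = ((val s + val t) %% p)%N.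
Proof. by rewrite /=; congr (_ %% _)%N; apply: Fp_cast. Qed.

Lemma ee0 : ee 0 = 1.
Proof. by rewrite /ee expr0. Qed.

Lemma eeD s t : ee (s + t) = ee s * ee t.
Proof. by rewrite /ee valFpD (expr_mod _ zp) exprD. Qed.

Lemma eeN t : ee (- t) = (ee t)^-1.
Proof.
have h : ee (- t) * ee t = 1 by rewrite -eeD addNr ee0.
have ht : ee t != 0.
  apply/eqP => h0; move: h; rewrite h0 mulr0 => /eqP; rewrite eq_sym oner_eq0.
  by [].
by apply: (mulIf ht); rewrite h mulVf.
Qed.

Lemma ee_eq1 t : ee t = 1 -> t = 0.
Proof.
move=> h; apply/val_inj => /=; apply/eqP; apply/negPn/negP => ht.
have p0 : (0 < p)%N by apply: prime_gt0.
have [m zm mp] := prim_order_exists p0 zp.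
case: (m =P 1)%N => [m1 | m1].
  move: zm; rewrite m1 => /prim_expr_order; rewrite expr1 => z1'.
  by move: z1; rewrite z1' eqxx.
have mpe : m = p by apply/(prime_nt_dvdP hp) => //; apply/eqP.
rewrite mpe in zm.
have : (p %| val t)%N by rewrite (prim_order_dvd zm) -/(ee t) h.
have lt : (val t < p)%N by rewrite -[X in (_ < X)%N](Fp_cast hp) ltn_ord.
have vt : (0 < val t)%N by rewrite lt0n.
by move/(dvdn_leq vt) => le; move: (leq_ltn_trans le lt); rewrite ltnn.
Qed.

Lemma card_F : #|'F_p| = p.
Proof. exact: card_Fp. Qed.

Lemma sum_ee (u : 'F_p) : \sum_(a : 'F_p) ee (a * u) = (u == 0)%:R * p%:R.
Proof.
case: (u =P 0) => [->|hu].
  under eq_bigr => a _ do rewrite mulr0 ee0.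
  by rewrite sumr_const card_F mul1r.
rewrite mul0r.
set S := \sum_a _.
have eS : S = ee u * S.
  rewrite {1}/S (reindex_inj (addIr 1)) /= mulr_sumr.
  by apply: eq_bigr => a _; rewrite mulrDl mul1r eeD mulrC.
have : (1 - ee u) * S = 0 by rewrite mulrBl -eS mul1r subrr.
move/eqP; rewrite mulf_eq0 subr_eq0 => /orP [/eqP h|/eqP //].
by exfalso; apply: hu; apply: ee_eq1; rewrite h.
Qed.


Lemma normz : `|z| = 1.
Proof.
apply/eqP; rewrite -(pexpr_eq1 (prime_gt0 hp)) ?normr_ge0 //.
by rewrite -normrX zp normr1.
Qed.

Lemma z0 : z != 0.
Proof. by apply/eqP => h; move: normz; rewrite h normr0 => /eqP; rewrite eq_sym oner_eq0. Qed.

Lemma conjz : z^* = z^-1.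
Proof.
have h : z * z^* = 1 by rewrite -normCK normz expr1n.
by rewrite -[z^*]mul1r -(mulVf z0) -mulrA h mulr1.
Qed.

Lemma conj_ee t : (ee t)^* = ee (- t).
Proof.
have cX : forall (x : C) n, (x ^+ n)^* = x^* ^+ n by move=> x n; rewrite rmorphXn.
by rewrite eeN /ee cX conjz exprVn.
Qed.

Lemma dotvDl l (x y d : 'rV['F_p]_l) : dotv (x + y) d = dotv x d + dotv y d.
Proof. by rewrite /dotv -big_split; apply: eq_bigr => i _; rewrite mxE mulrDl. Qed.

Lemma dotvBr l (y r r' : 'rV['F_p]_l) : dotv y (r - r') = dotv y r - dotv y r'.
Proof. by rewrite /dotv -sumrB; apply: eq_bigr => i _; rewrite !mxE mulrBr. Qed.

Lemma dotv_delta l i (d : 'rV['F_p]_l) : dotv (delta_mx 0 i) d = d 0 i.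
Proof.
rewrite /dotv (bigD1 i) //= big1 ?addr0; first by rewrite mxE !eqxx mul1r.
by move=> j hj; rewrite mxE eqxx /= (negbTE hj) mul0r.
Qed.

Lemma dotv0r l (y : 'rV['F_p]_l) : dotv y 0 = 0.
Proof. by rewrite /dotv big1 // => i _; rewrite mxE mulr0. Qed.

Lemma card_V l : #|{: 'rV['F_p]_l}| = (p ^ l)%N.
Proof. by rewrite card_mx card_F mul1n. Qed.

Lemma sum_ee_vec l (a : 'F_p) (d : 'rV['F_p]_l) : a != 0 ->
  \sum_(y : 'rV['F_p]_l) ee (a * dotv y d) = (d == 0)%:R * (p ^ l)%:R.
Proof.
move=> ha; case: (d =P 0) => [->|hd].
  under eq_bigr => y _ do rewrite dotv0r mulr0 ee0.
  by rewrite sumr_const card_V mul1r.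
rewrite mul0r.
have [i di] : exists i, d 0 i != 0.
  case: (pickP (fun i => d 0 i != 0)) => [i hi|h]; first by exists i.
  exfalso; apply: hd; apply/matrixP => a' b; rewrite ord1 mxE.
  by move: (h b) => /= /negbFE /eqP.
set S := \sum_y _.
have eS : S = ee (a * d 0 i) * S.
  rewrite {1}/S (reindex_inj (addIr (delta_mx 0 i))) /= mulr_sumr.
  by apply: eq_bigr => y _; rewrite dotvDl dotv_delta mulrDr eeD mulrC.
have : (1 - ee (a * d 0 i)) * S = 0 by rewrite mulrBl -eS mul1r subrr.
move/eqP; rewrite mulf_eq0 subr_eq0 => /orP [/eqP h|/eqP //].
exfalso; have := ee_eq1 (esym h); apply/eqP.
by rewrite mulf_neq0.
Qed.


Lemma Npos l : ((p ^ l)%:R : C) != 0.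
Proof. by rewrite pnatr_eq0 -lt0n expn_gt0 prime_gt0. Qed.

Lemma ee_unit t : ee t * (ee t)^* = 1.
Proof. by rewrite conj_ee -eeD subrr ee0. Qed.

Definition Pop l d (E : 'rV['F_p]_l -> 'F_p -> 'M[C]_d) (a : 'F_p) (y : 'rV['F_p]_l)
  : 'M[C]_d :=
  ((p ^ l)%:R)^-1 *: \sum_(r : 'rV['F_p]_l) \sum_(g : 'F_p) ee (a * (g - dotv y r)) *: E r g.

Lemma Pop0 l d (E : 'rV['F_p]_l -> 'F_p -> 'M[C]_d) y :
  (forall r, povm (E r)) -> Pop E 0 y = 1%:M.
Proof.
move=> hE; rewrite /Pop.
under eq_bigr => r _ do under eq_bigr => g _ do rewrite mul0r ee0 scale1r.
under eq_bigr => r _ do rewrite (proj2 (hE r)).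
by rewrite sumr_const card_V -scaler_nat scalerA mulVf ?Npos // scale1r.
Qed.


Lemma adjmxN m n (A : 'M[C]_(m,n)) : adjmx (- A) = - adjmx A.
Proof. by apply/matrixP => i j; rewrite !adjmxE !mxE rmorphN. Qed.

Lemma Pop_psd l d (E : 'rV['F_p]_l -> 'F_p -> 'M[C]_d) a :
  a != 0 -> (forall r, povm (E r)) ->
  psd (1%:M - \sum_y adjmx (Pop E a y) *m Pop E a y).
Proof.
move=> ha hE.
set c := ((p ^ l)%:R : C)^-1.
have c0 : 0 <= c by rewrite invr_ge0 ler0n.
have cN : c * (p ^ l)%:R = 1 by rewrite mulVf ?Npos.
pose W r := \sum_g ee (a * g) *: E r g.
have PW : forall y, Pop E a y = c *: \sum_r ee (- (a * dotv y r)) *: W r.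
  move=> y; rewrite /Pop; congr (_ *: _); apply: eq_bigr => r _.
  rewrite /W scaler_sumr; apply: eq_bigr => g _.
  by rewrite scalerA -eeD; congr (ee _ *: _); ring.
have adjP : forall y, adjmx (Pop E a y) = c *: \sum_r ee (a * dotv y r) *: adjmx (W r).
  move=> y; rewrite PW adjmxZ (geC0_conj c0) adjmx_sum; congr (_ *: _).
  by apply: eq_bigr => r _; rewrite adjmxZ conj_ee opprK.
have PP : forall y, adjmx (Pop E a y) *m Pop E a y =
   \sum_r \sum_r' (c * c * ee (a * dotv y (r - r'))) *: (adjmx (W r) *m W r').
  move=> y; rewrite adjP PW -scalemxAl -scalemxAr scalerA mulmx_suml scaler_sumr.
  apply: eq_bigr => r _; rewrite mulmx_sumr scaler_sumr; apply: eq_bigr => r' _.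
  rewrite -scalemxAl -scalemxAr !scalerA; congr (_ *: _).
  by rewrite -eeD dotvBr mulrBr.
have sumPP : \sum_y adjmx (Pop E a y) *m Pop E a y = c *: \sum_r adjmx (W r) *m W r.
  under eq_bigr => y _ do rewrite PP.
  rewrite exchange_big /=.
  under eq_bigr => r _ do rewrite exchange_big /=.
  rewrite scaler_sumr; apply: eq_bigr => r _.
  under eq_bigr => r' _ do rewrite -scaler_suml -mulr_sumr sum_ee_vec // subr_eq0.
  rewrite (bigD1 r) //= eqxx big1 ?addr0.
    by rewrite mul1r -mulrA cN mulr1.
  by move=> r' hr'; rewrite eq_sym (negbTE hr') mul0r mulr0 scale0r.
rewrite sumPP; split.
  rewrite adjmxD adjmxN adjmx1 adjmxZ (geC0_conj c0) adjmx_sum.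
  by under eq_bigr => r _ do rewrite adjmxM adjmxK.
move=> v; rewrite nnegrE.
have -> : (adjmx v *m (1%:M - c *: \sum_r adjmx (W r) *m W r) *m v) 0 0
     = nrm v - c * \sum_r nrm (W r *m v).
  rewrite mulmxBr mulmx1 mulmxBl -scalemxAr -scalemxAl mulmx_sumr mulmx_suml.
  rewrite mxE [X in _ + X]mxE [X in - X]mxE summxE.
  congr (_ - _ * _); apply: eq_bigr => r _.
  by rewrite /nrm adjmxM !mulmxA.
rewrite subr_ge0.
apply: (@le_trans _ _ (c * \sum_(r : 'rV['F_p]_l) nrm v)).
  apply: ler_wpM2l => //; apply: ler_sum => r _.
  apply: W_bound; [exact: hE | by move=> g; apply: ee_unit].
by rewrite sumr_const card_V -mulr_natl mulrA mulrC -[in X in _ <= X](mul1r (nrm v)) mulrC cN.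
Qed.


Lemma reorder6 (I J K L M N' : finType) (F : I -> J -> K -> L -> M -> N' -> C) :
  \sum_(xB : I) \sum_(xC : J) \sum_(r : K) \sum_(g : L) \sum_(s : M) \sum_(h : N')
     F xB xC r g s h =
  \sum_r \sum_s \sum_xB \sum_xC \sum_g \sum_h F xB xC r g s h.
Proof.
under eq_bigr => xB _ do under eq_bigr => xC _ do under eq_bigr => r _ do
  rewrite exchange_big.
under eq_bigr => xB _ do rewrite exchange_big.
rewrite exchange_big.
under eq_bigr => r _ do under eq_bigr => xB _ do rewrite exchange_big.
by under eq_bigr => r _ do rewrite exchange_big.
Qed.

Lemma pull7 (A I J K L M N' : finType) (F : A -> I -> J -> K -> L -> M -> N' -> C) :
  \sum_(i : I) \sum_(j : J) \sum_(k : K) \sum_(l : L) \sum_(m : M) \sum_(n : N')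
    \sum_(a : A) F a i j k l m n =
  \sum_a \sum_i \sum_j \sum_k \sum_l \sum_m \sum_n F a i j k l m n.
Proof.
symmetry; rewrite exchange_big; apply: eq_bigr => i _.
rewrite exchange_big; apply: eq_bigr => j _.
rewrite exchange_big; apply: eq_bigr => k _.
rewrite exchange_big; apply: eq_bigr => l _.
rewrite exchange_big; apply: eq_bigr => m _.
by rewrite exchange_big.
Qed.

Lemma mull6 (I J K L M N' : finType) (k : C) (F : I -> J -> K -> L -> M -> N' -> C) :
  \sum_(i : I) \sum_(j : J) \sum_(k' : K) \sum_(l : L) \sum_(m : M) \sum_(n : N')
     (k * F i j k' l m n) =
  k * \sum_i \sum_j \sum_k' \sum_l \sum_m \sum_n F i j k' l m n.
Proof.
rewrite mulr_sumr; apply: eq_bigr => i _.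
rewrite mulr_sumr; apply: eq_bigr => j _.
rewrite mulr_sumr; apply: eq_bigr => k' _.
rewrite mulr_sumr; apply: eq_bigr => l _.
rewrite mulr_sumr; apply: eq_bigr => m _.
by rewrite mulr_sumr.
Qed.

Lemma condE (g h d1 d2 : 'F_p) :
  [exists j : 'F_p, exists k : 'F_p, [&& j + k == 0, g == d1 + j & h == d2 + k]]
  = ((g - d1) + (h - d2) == 0).
Proof.
apply/existsP/eqP.
  case=> j /existsP [k /and3P [/eqP jk /eqP -> /eqP ->]].
  by rewrite (addrC d1) addrK (addrC d2) addrK.
move=> e; exists (g - d1); apply/existsP; exists (h - d2).
by rewrite e eqxx /= [d1 + _]addrC subrK [d2 + _]addrC subrK !eqxx.
Qed.

Lemma expandT l dB dC (rho : 'rV['F_p]_l -> 'rV['F_p]_l -> 'M[C]_(dB * dC))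
   (EB : 'rV['F_p]_l -> 'F_p -> 'M[C]_dB) (EC : 'rV['F_p]_l -> 'F_p -> 'M[C]_dC) a :
  \sum_xB \sum_xC \tr (rho xB xC *m (Pop EB a xB *t Pop EC a xC)) =
  (p ^ (2 * l))%:R^-1 *
    \sum_(rB : 'rV['F_p]_l) \sum_(rC : 'rV['F_p]_l)
    \sum_(xB : 'rV['F_p]_l) \sum_(xC : 'rV['F_p]_l)
    \sum_(gB : 'F_p) \sum_(gC : 'F_p)
      (ee (a * (gB - dotv xB rB)) * ee (a * (gC - dotv xC rC))) *
      \tr (rho xB xC *m (EB rB gB *t EC rC gC)).
Proof.
have kk : ((p ^ (2 * l))%:R : C)^-1 = ((p ^ l)%:R)^-1 * ((p ^ l)%:R)^-1.
  by rewrite -invfM -natrM -expnD addnn -mul2n.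
have trlin : forall k (A : 'M[C]_k) (I : finType) (F : I -> 'M[C]_k),
    \tr (A *m \sum_i F i) = \sum_i \tr (A *m F i).
  by move=> k A I F; rewrite mulmx_sumr raddf_sum.
have trZ : forall k (A B : 'M[C]_k) c, \tr (A *m (c *: B)) = c * \tr (A *m B).
  by move=> k A B c; rewrite -scalemxAr mxtraceZ.
rewrite -reorder6 kk -mull6.
apply: eq_bigr => xB _; apply: eq_bigr => xC _.
rewrite /Pop tensmxZl tensmxZr scalerA trZ.
rewrite tensmx_suml trlin mulr_sumr; apply: eq_bigr => r _.
rewrite tensmx_suml trlin mulr_sumr; apply: eq_bigr => g _.
rewrite tensmxZl trZ tensmx_sumr trlin mulr_sumr mulr_sumr; apply: eq_bigr => s _.
rewrite tensmx_sumr trlin mulr_sumr mulr_sumr; apply: eq_bigr => h _.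
by rewrite tensmxZr trZ; ring.
Qed.


Lemma main_bound l dB dC (rho : 'rV['F_p]_l -> 'rV['F_p]_l -> 'M[C]_(dB * dC)) (delta : C) :
  cq_state rho ->
  (forall (EB : 'rV['F_p]_l -> 'M[C]_dB) (EC : 'rV['F_p]_l -> 'M[C]_dC),
      povm EB -> povm EC ->
      \sum_(xB : 'rV['F_p]_l) \sum_(xC : 'rV['F_p]_l)
         \tr (rho xB xC *m (EB xB *t EC xC)) <= delta) ->
  forall (EB : 'rV['F_p]_l -> 'F_p -> 'M[C]_dB) (EC : 'rV['F_p]_l -> 'F_p -> 'M[C]_dC),
  (forall rB, povm (EB rB)) -> (forall rC, povm (EC rC)) ->
  (p ^ (2 * l))%:R^-1 *
    \sum_(rB : 'rV['F_p]_l) \sum_(rC : 'rV['F_p]_l)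
    \sum_(xB : 'rV['F_p]_l) \sum_(xC : 'rV['F_p]_l)
    \sum_(gB : 'F_p) \sum_(gC : 'F_p |
        [exists j : 'F_p, exists k : 'F_p,
           [&& j + k == 0, gB == dotv xB rB + j & gC == dotv xC rC + k]])
      \tr (rho xB xC *m (EB rB gB *t EC rC gC))
  <= p%:R^-1 + 1%:R * 3.-root delta.
Proof.
move=> hrho hyp EB EC hEB hEC.
set LHS := (_ * _).
pose Ta a := \sum_xB \sum_xC \tr (rho xB xC *m (Pop EB a xB *t Pop EC a xC)).
have p0 : (p%:R : C) != 0 by rewrite pnatr_eq0 -lt0n prime_gt0.
have k0 : 0 <= ((p ^ (2 * l))%:R : C)^-1 by rewrite invr_ge0 ler0n.
have pinv0 : 0 <= (p%:R : C)^-1 by rewrite invr_ge0 ler0n.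
have inner : forall r s xB xC g,
    \sum_(h | [exists j : 'F_p, exists k : 'F_p,
           [&& j + k == 0, g == dotv xB r + j & h == dotv xC s + k]])
      \tr (rho xB xC *m (EB r g *t EC s h)) =
    \sum_h \sum_a p%:R^-1 * ((ee (a * (g - dotv xB r)) * ee (a * (h - dotv xC s))) *
       \tr (rho xB xC *m (EB r g *t EC s h))).
  move=> r s xB xC g; rewrite big_mkcond; apply: eq_bigr => h _.
  rewrite condE -mulr_sumr -mulr_suml.
  have -> : \sum_a ee (a * (g - dotv xB r)) * ee (a * (h - dotv xC s)) =
      ((g - dotv xB r) + (h - dotv xC s) == 0)%:R * p%:R.
    by rewrite -sum_ee; apply: eq_bigr => a _; rewrite -eeD; congr ee; ring.
  case: (_ == 0) => /=.
  2: by rewrite !mul0r mulr0.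
  by rewrite mul1r mulrA mulVf // mul1r.
have eL : LHS = p%:R^-1 * \sum_a Ta a.
  rewrite /LHS.
  under eq_bigr => r _ do under eq_bigr => s _ do under eq_bigr => xB _ do
    under eq_bigr => xC _ do under eq_bigr => g _ do rewrite inner.
  rewrite pull7.
  under eq_bigr => a _ do rewrite mull6.
  rewrite /Ta.
  under [in RHS]eq_bigr => a _ do rewrite expandT.
  rewrite !mulr_sumr; apply: eq_bigr => a _.
  by rewrite mulrCA.
have T0 : Ta 0 = 1.
  rewrite /Ta.
  under eq_bigr => xB _ do under eq_bigr => xC _ do
    rewrite (Pop0 _ hEB) (Pop0 _ hEC) tensmx11 mulmx1.
  exact: (proj2 hrho).
have LHS0 : 0 <= LHS.
  apply: mulr_ge0 => //.
  apply: sumr_ge0 => r _; apply: sumr_ge0 => s _; apply: sumr_ge0 => xB _.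
  apply: sumr_ge0 => xC _; apply: sumr_ge0 => g _; apply: sumr_ge0 => h _.
  apply: tr_psd_tens; [exact: (proj1 hrho xB xC) | exact: (proj1 (hEB r) g) | exact: (proj1 (hEC s) h)].
have LHS1 : LHS <= 1.
  rewrite -T0 /Ta expandT /LHS.
  apply: ler_wpM2l => //.
  apply: ler_sum => r _; apply: ler_sum => s _; apply: ler_sum => xB _.
  apply: ler_sum => xC _; apply: ler_sum => g _.
  rewrite big_mkcond; apply: ler_sum => h _.
  rewrite !mul0r ee0 !mul1r.
  case: ifP => _ //.
  apply: tr_psd_tens; [exact: (proj1 hrho xB xC) | exact: (proj1 (hEB r) g) | exact: (proj1 (hEC s) h)].
have d0 : 0 <= delta := delta_ge0 0 hrho hyp.
set c := 3.-root delta.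
have c0 : 0 <= c by rewrite rootC_ge0.
have c3 : c ^+ 3 = delta by rewrite rootCK.
rewrite mul1r.
have creal : c \is Num.real by apply: ger0_real.
have [c1|c1] := boolP (c <= 1); last first.
  have c1' : 1 <= c.
    by apply: ltW; rewrite real_ltNge ?realE ?ler01 ?c1 ?orbT.
  apply: le_trans LHS1 _.
  apply: le_trans c1' _; by rewrite lerDr.
have hTa : forall a, a != 0 -> `|Ta a| <= c.
  move=> a ha; apply: small_bound => // lam lam0; rewrite c3.
  exact: (G_bound 0 hrho hyp (Pop_psd ha hEB) (Pop_psd ha hEC) lam0).
rewrite -lerBlDl.
have Lreal : LHS - p%:R^-1 \is Num.real by apply: rpredB; apply: ger0_real.
apply: (le_trans (real_ler_norm Lreal)).
rewrite eL (bigD1 0) //= T0 mulrDr.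
rewrite mulr1 [p%:R^-1 + _]addrC addrK normrM ger0_norm //.
apply: (@le_trans _ _ (p%:R^-1 * \sum_(a : 'F_p) c)).
  apply: ler_wpM2l => //.
  apply: (le_trans (ler_norm_sum _ _ _)).
  rewrite [X in X <= _]big_mkcond; apply: ler_sum => a _.
  by case: ifP => ha; [exact: hTa|].
by rewrite sumr_const card_F -(mulr_natl c p) mulrA mulVf // mul1r.
Qed.

End Char.

Theorem lemma31 :
  exists K : nat,
  forall (p : nat), (p = 2 \/ p = 3)%N ->
  forall (l : nat) (C : numClosedFieldType) (dB dC : nat)
    (rho : 'rV['F_p]_l -> 'rV['F_p]_l -> 'M[C]_(dB * dC)) (delta : C),
  cq_state rho ->
  (forall (EB : 'rV['F_p]_l -> 'M[C]_dB) (EC : 'rV['F_p]_l -> 'M[C]_dC),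
      povm EB -> povm EC ->
      \sum_(xB : 'rV['F_p]_l) \sum_(xC : 'rV['F_p]_l)
         \tr (rho xB xC *m (EB xB *t EC xC)) <= delta) ->
  forall (EB : 'rV['F_p]_l -> 'F_p -> 'M[C]_dB) (EC : 'rV['F_p]_l -> 'F_p -> 'M[C]_dC),
  (forall rB, povm (EB rB)) -> (forall rC, povm (EC rC)) ->
  (p ^ (2 * l))%:R^-1 *
    \sum_(rB : 'rV['F_p]_l) \sum_(rC : 'rV['F_p]_l)
    \sum_(xB : 'rV['F_p]_l) \sum_(xC : 'rV['F_p]_l)
    \sum_(gB : 'F_p) \sum_(gC : 'F_p |
        [exists j : 'F_p, exists k : 'F_p,
           [&& j + k == 0, gB == dotv xB rB + j & gC == dotv xC rC + k]])
      \tr (rho xB xC *m (EB rB gB *t EC rC gC))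
  <= p%:R^-1 + K%:R * 3.-root delta.
Proof.
exists 1%N.
move=> p hp2 l C dB dC rho delta hrho hyp EB EC hEB hEC.
have hp : prime p by case: hp2 => ->.
have [z zp z1] : exists2 z : C, z ^+ p = 1 & z != 1.
  case: hp2 => ->.
    exists (-1); first by rewrite sqrrN expr1n.
    apply/eqP => h.
    have : (1 : C) + 1 = 0 by rewrite -{1}h addNr.
    have e2 : (1 : C) + 1 = 2%:R by ring.
    by rewrite e2 => /eqP; rewrite pnatr_eq0.
  pose s : C := sqrtC (- 3%:R).
  have s2 : s ^+ 2 = - 3%:R by rewrite sqrtCK.
  have two0 : (2%:R : C) != 0 by rewrite pnatr_eq0.
  pose w : C := (s - 1) / 2%:R.
  have q : w ^+ 2 + w + 1 = 0.
    have -> : w ^+ 2 + w + 1 = (s ^+ 2 + 3%:R) / 4%:R.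
      by rewrite /w; field; rewrite ?pnatr_eq0.
    by rewrite s2 addNr mul0r.
  exists w.
    have -> : w ^+ 3 = (w - 1) * (w ^+ 2 + w + 1) + 1 by ring.
    by rewrite q mulr0 add0r.
  apply/eqP => h; move: q; rewrite h expr1n.
  have e3 : (1 : C) + 1 + 1 = 3%:R by ring.
  by rewrite e3 => /eqP; rewrite pnatr_eq0.
exact: (main_bound hp zp z1 hrho hyp hEB hEC).
Qed.
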